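(* Let $\{1\}\to F\xrightarrow{\iota}G\xrightarrow{\pi}H\to\{1\}$ be a split exact sequence of groups with splitting $\sigma:H\to G$, and let $\Theta:H\to\mathrm{Aut}(F)$, $\Theta_h(x)=\iota^{-1}(\sigma(h)\iota(x)\sigma(h)^{-1})$. Then: (a) the composition $\Phi:\mathbf{k}F\otimes\mathbf{k}H\xrightarrow{\mathbf{k}\iota\otimes\mathbf{k}\sigma}\mathbf{k}G\otimes\mathbf{k}G\xrightarrow{\text{mult}}\mathbf{k}G$ is an isomorphism of left $\mathbf{k}F$-modules; (b) if $\Theta_h^{\mathrm{ab}}=\mathrm{id}_{F^{\mathrm{ab}}}$ for every $h\in H$, then for every $n\ge0$, $\Phi$ restricts to an isomorphism of left $\mathbf{k}F$-modules $\sum_{a+b=n}I_F^a\otimes I_H^b\xrightarrow{\sim}I_G^n$ (sum over $a,b\ge0$, inside $\mathbf{k}F\otimes\mathbf{k}H$).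
   Context: $\mathbf{k}$ is a commutative $\mathbb{Q}$-algebra. For a group $G$, $\mathbf{k}G$ is its group algebra, $I_G$ its augmentation ideal (spanned by $g-1$), $I_G^0=\mathbf{k}G$. $\Theta_h^{\mathrm{ab}}$ is the automorphism of the abelianization $F^{\mathrm{ab}}$ induced by $\Theta_h$. *)

(* Defs.v *)
From HB Require Import structures.
From mathcomp Require Import all_boot all_order all_algebra.
From mathcomp Require Import finmap.
From mathcomp Require Import monalg.

Set Implicit Arguments.
Unset Strict Implicit.
Unset Printing Implicit Defensive.

Import GRing.Theory.
Local Open Scope ring_scope.

Definition is_Qalgebra (k : comUnitRingType) : Prop :=
  forall n : nat, (n.+1)%:R \is a @GRing.unit k.

(* Group algebra kG : finitely supported functions G -> k, basis [g]. *)
Notation galg k G := {malg k[G]}.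

Definition gb (k : comUnitRingType) (G : groupType) (g : G) : galg k G :=
  << (1 : k) *g g >>.

Definition gmul (k : comUnitRingType) (G : groupType) (u v : galg k G)
  : galg k G :=
  \sum_(x <- msupp u) \sum_(y <- msupp v) << u@_x * v@_y *g (x * y)%g >>.

Definition gmap (k : comUnitRingType) (A B : groupType) (f : A -> B)
  (u : galg k A) : galg k B :=
  \sum_(x <- msupp u) << u@_x *g f x >>.

Inductive kspan (k : comUnitRingType) (V : lmodType k) (S : V -> Prop)
  : V -> Prop :=
| kspan0 : kspan S 0
| kspan_gen v : S v -> kspan S v
| kspan_add v w : kspan S v -> kspan S w -> kspan S (v + w)
| kspan_scale (c : k) v : kspan S v -> kspan S (c *: v).

Definition aug_ideal (k : comUnitRingType) (G : groupType) : galg k G -> Prop :=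
  kspan (fun u => exists g : G, u = @gb k G g - @gb k G 1%g).

Fixpoint aug_pow (k : comUnitRingType) (G : groupType) (n : nat)
  : galg k G -> Prop :=
  match n with
  | 0 => fun _ => True
  | m.+1 => kspan (fun w => exists u v, @aug_pow k G m u /\ @aug_ideal k G v
                                      /\ w = gmul u v)
  end.

(* Tensor product kF (x) kH, realised as the free k-module on F x H
   (the basis x (x) h of kF (x) kH is the pair (x, h)).               *)
Notation tens k F H := {malg k[(F * H)%type]}.

Definition tmul (k : comUnitRingType) (F H : groupType)
  (u : galg k F) (v : galg k H) : tens k F H :=
  \sum_(x <- msupp u) \sum_(y <- msupp v) << u@_x * v@_y *g (x, y) >>.

(* left kF-module structure on kF (x) kH : a . (u (x) v) = (a u) (x) v *)
Definition tact (k : comUnitRingType) (F H : groupType)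
  (a : galg k F) (t : tens k F H) : tens k F H :=
  \sum_(x <- msupp a) \sum_(p <- msupp t)
     << a@_x * t@_p *g ((x * p.1)%g, p.2) >>.

Definition gact (k : comUnitRingType) (F G : groupType) (iota : F -> G)
  (a : galg k F) (g : galg k G) : galg k G :=
  gmul (@gmap k F G iota a) g.

Definition Phi (k : comUnitRingType) (F G H : groupType)
  (iota : F -> G) (sigma : H -> G) (t : tens k F H) : galg k G :=
  \sum_(p <- msupp t) << t@_p *g (iota p.1 * sigma p.2)%g >>.

Definition tens_filt (k : comUnitRingType) (F H : groupType) (n : nat)
  : tens k F H -> Prop :=
  kspan (fun t => exists a b u v, a + b = n /\ @aug_pow k F a u
                                  /\ @aug_pow k H b v /\ t = tmul u v)%N.

Inductive subgroup_gen (G : groupType) (S : G -> Prop) : G -> Prop :=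
| sgen1 : subgroup_gen S 1%g
| sgenM s z : S s -> subgroup_gen S z -> subgroup_gen S (s * z)%g
| sgenV s z : S s -> subgroup_gen S z -> subgroup_gen S (s^-1 * z)%g.

Definition commutator_subgroup (G : groupType) : G -> Prop :=
  subgroup_gen (fun c => exists x y : G, c = [~ x, y]%g).

Definition group_hom (A B : groupType) (f : A -> B) : Prop :=
  forall x y, f (x * y)%g = (f x * f y)%g.

(* Main.v *)
Require Import Defs.
From HB Require Import structures.
From mathcomp Require Import all_boot all_order all_algebra.
From mathcomp Require Import finmap.
From mathcomp Require Import monalg.
From Stdlib Require Import ClassicalEpsilon.

Set Implicit Arguments.
Unset Strict Implicit.
Unset Printing Implicit Defensive.
Import GRing.Theory.
Local Open Scope ring_scope.

Section Lin.
Variables (k : comUnitRingType) (T : choiceType) (V : lmodType k).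

Definition bs (x : T) : {malg k[T]} := << (1:k) *g x >>.
Definition lin (f : T -> V) (u : {malg k[T]}) : V :=
  \sum_(x <- msupp u) u@_x *: f x.

Lemma linEw f u (d : {fset T}) : (msupp u `<=` d)%fset ->
  lin f u = \sum_(x <- d) u@_x *: f x.
Proof.
move=> sub; rewrite /lin (big_fset_incl _ sub) // => x _ /mcoeff_outdom ->.
by rewrite scale0r.
Qed.

Lemma linD f u v : lin f (u + v) = lin f u + lin f v.
Proof.
rewrite (@linEw f (u + v) (msupp u `|` msupp v)%fset) ?msuppD_le //.
rewrite (@linEw f u (msupp u `|` msupp v)%fset) ?fsubsetUl //.
rewrite (@linEw f v (msupp u `|` msupp v)%fset) ?fsubsetUr //.
rewrite -big_split /=; apply: eq_bigr => x _; by rewrite mcoeffD scalerDl.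
Qed.

Lemma linZ f c u : lin f (c *: u) = c *: lin f u.
Proof.
rewrite (@linEw f (c *: u) (msupp u)) ?msuppZ_le // /lin scaler_sumr.
by apply: eq_bigr => x _; rewrite mcoeffZ scalerA.
Qed.

Lemma lin0 f : lin f 0 = 0.
Proof. by rewrite -(scale0r 0) linZ scale0r. Qed.

Lemma linU f c x : lin f << c *g x >> = c *: f x.
Proof.
by rewrite (@linEw f _ [fset x]%fset) ?msuppU_le // big_seq_fset1 mcoeffUU.
Qed.

Lemma lin_bs f x : lin f (bs x) = f x.
Proof. by rewrite linU scale1r. Qed.

Lemma eq_lin f g u : f =1 g -> lin f u = lin g u.
Proof. by move=> e; apply: eq_bigr => x _; rewrite e. Qed.

Lemma linfD f g u : lin (fun x => f x + g x) u = lin f u + lin g u.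
Proof. by rewrite /lin -big_split; apply: eq_bigr => x _; rewrite scalerDr. Qed.

Lemma linfZ c f u : lin (fun x => c *: f x) u = c *: lin f u.
Proof.
rewrite /lin scaler_sumr; apply: eq_bigr => x _.
by rewrite !scalerA mulrC.
Qed.

Lemma linf0 u : lin (fun _ => 0) u = 0.
Proof. by rewrite /lin big1 // => x _; rewrite scaler0. Qed.

End Lin.

Lemma bsZ (k : comUnitRingType) (T : choiceType) c (x : T) :
  << c *g x >> = c *: bs k x.
Proof.
apply/malgP => y; rewrite mcoeffZ !mcoeffU.
by case: (x == y); rewrite ?mulr1n ?mulr0n ?mulr1 ?mulr0.
Qed.

Lemma lin_bsE (k : comUnitRingType) (T : choiceType) (u : {malg k[T]}) :
  lin (@bs k T) u = u.
Proof. rewrite {2}(monalgE u) /lin; apply: eq_bigr => x _; by rewrite bsZ. Qed.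

Definition islin (k : comUnitRingType) (U V : lmodType k) (f : U -> V) :=
  (forall u v, f (u + v) = f u + f v) /\ (forall c u, f (c *: u) = c *: f u).

Lemma islin0 (k : comUnitRingType) (U V : lmodType k) (f : U -> V) :
  islin f -> f 0 = 0.
Proof. by case=> _ hZ; rewrite -(scale0r 0) hZ scale0r. Qed.

Lemma lin_islin (k : comUnitRingType) (T : choiceType) (V : lmodType k) f :
  islin (@lin k T V f).
Proof. split; [exact: linD | exact: linZ]. Qed.

Lemma islin_comp (k : comUnitRingType) (U V W : lmodType k) (f : U -> V) (g : V -> W) :
  islin f -> islin g -> islin (fun u => g (f u)).
Proof.
move=> [fD fZ] [gD gZ]; split => *; by rewrite ?fD ?gD ?fZ ?gZ.
Qed.

Lemma islin_lin (k : comUnitRingType) (T : choiceType) (V : lmodType k)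
  (phi : {malg k[T]} -> V) : islin phi ->
  forall u, phi u = lin (fun x => phi (bs k x)) u.
Proof.
move=> hphi u; rewrite -{1}(lin_bsE u) /lin.
rewrite (big_morph phi (id1 := 0) (op1 := +%R) (proj1 hphi)) ?(islin0 hphi) //.
by apply: eq_bigr => x _; rewrite (proj2 hphi).
Qed.

Lemma lin_ind (k : comUnitRingType) (T : choiceType) (V : lmodType k)
  (phi psi : {malg k[T]} -> V) : islin phi -> islin psi ->
  (forall x, phi (bs k x) = psi (bs k x)) -> forall u, phi u = psi u.
Proof.
move=> h1 h2 e u; rewrite (islin_lin h1) (islin_lin h2); exact: eq_lin.
Qed.

Lemma lin_lin (k : comUnitRingType) (T U : choiceType) (V : lmodType k)
  (g : U -> V) (f : T -> {malg k[U]}) u :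
  lin g (lin f u) = lin (fun x => lin g (f x)) u.
Proof.
rewrite (islin_lin (islin_comp (lin_islin f) (lin_islin g))).
by apply: eq_lin => x; rewrite lin_bs.
Qed.

Definition subsp (k : comUnitRingType) (V : lmodType k) (P : V -> Prop) :=
  P 0 /\ (forall u v, P u -> P v -> P (u + v)) /\ (forall c u, P u -> P (c *: u)).

Section Subsp.
Variables (k : comUnitRingType) (V : lmodType k).
Implicit Types P : V -> Prop.

Lemma subspN P u : subsp P -> P u -> P (- u).
Proof. by move=> [_ [_ hZ]] hu; rewrite -scaleN1r; apply: hZ. Qed.

Lemma subspB P u v : subsp P -> P u -> P v -> P (u - v).
Proof. by move=> hP hu hv; apply: (proj1 (proj2 hP)) => //; apply: subspN. Qed.

Lemma subspD P u v : subsp P -> P u -> P v -> P (u + v).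
Proof. by move=> hP; apply: (proj1 (proj2 hP)). Qed.

Lemma subspZ P c u : subsp P -> P u -> P (c *: u).
Proof. by move=> hP; apply: (proj2 (proj2 hP)). Qed.

Lemma subsp0 P : subsp P -> P 0.
Proof. by case. Qed.

Lemma kspan_subsp S : subsp (@kspan k V S).
Proof. split; [exact: kspan0 | split; [exact: kspan_add | exact: kspan_scale]]. Qed.

Lemma kspan_min S P : subsp P -> (forall v, S v -> P v) -> forall v, kspan S v -> P v.
Proof.
move=> [h0 [hD hZ]] hS v hv; elim: hv.
- exact: h0.
- exact: hS.
- by move=> *; apply: hD.
- by move=> *; apply: hZ.
Qed.

Lemma subsp_lin (T : choiceType) P (f : T -> V) u : subsp P -> (forall x, P (f x)) -> P (lin f u).
Proof.
move=> hP hf; rewrite /lin; elim/big_ind: _ => //; first exact: subsp0.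
  by move=> x y; apply: subspD.
by move=> x _; apply: subspZ.
Qed.

Lemma subsp_pre (U : lmodType k) (phi : U -> V) P : islin phi -> subsp P -> subsp (fun u => P (phi u)).
Proof.
move=> hphi hP; split; first by rewrite (islin0 hphi); apply: subsp0.
split=> *; rewrite ?(proj1 hphi) ?(proj2 hphi); [exact: subspD | exact: subspZ].
Qed.

End Subsp.

Lemma subsp_ind (k : comUnitRingType) (T : choiceType) (P : {malg k[T]} -> Prop) :
  subsp P -> (forall x, P (bs k x)) -> forall u, P u.
Proof. move=> hP hb u; rewrite -(lin_bsE u); exact: subsp_lin. Qed.

Lemma islinB (k : comUnitRingType) (U V : lmodType k) (f : U -> V) u v :
  islin f -> f (u - v) = f u - f v.
Proof.
move=> [hD hZ]; rewrite hD -scaleN1r hZ scaleN1r //.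
Qed.

Lemma islin_id (k : comUnitRingType) (U : lmodType k) : islin (fun u : U => u).
Proof. by []. Qed.

Lemma hom1 (A B : groupType) (f : A -> B) : group_hom f -> f 1%g = 1%g.
Proof.
move=> hf; apply: (@mulgI _ (f 1%g)); by rewrite -hf !mulg1.
Qed.

Lemma homV (A B : groupType) (f : A -> B) x : group_hom f -> f (x^-1)%g = (f x)^-1%g.
Proof.
move=> hf; apply: (@mulgI _ (f x)); by rewrite -hf !mulgV hom1.
Qed.

Section GA.
Variables (k : comUnitRingType) (X : groupType).
Local Notation A := (galg k X).
Local Notation bsX := (@bs k X).

Lemma gmulE (u v : A) : gmul u v = lin (fun x => lin (fun y => bsX (x * y)%g) v) u.
Proof.
rewrite /gmul /lin; apply: eq_bigr => x _; rewrite scaler_sumr.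
by apply: eq_bigr => y _; rewrite bsZ scalerA.
Qed.

Lemma gmul_linl (v : A) : islin (fun u => gmul u v).
Proof. split=> *; rewrite !gmulE; [exact: linD | exact: linZ]. Qed.

Lemma gmul_linr (u : A) : islin (gmul u).
Proof.
split=> *; rewrite !gmulE.
  by rewrite -linfD; apply: eq_lin => x; rewrite linD.
by rewrite -linfZ; apply: eq_lin => x; rewrite linZ.
Qed.

Lemma gmul_bs x y : gmul (bsX x) (bsX y) = bsX (x * y)%g.
Proof. by rewrite gmulE !lin_bs. Qed.

Lemma gmulA (u v w : A) : gmul (gmul u v) w = gmul u (gmul v w).
Proof.
move: u; apply: lin_ind.
- exact: (islin_comp (gmul_linl v) (gmul_linl w)).
- exact: gmul_linl.
move=> x; move: v; apply: lin_ind.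
- exact: (islin_comp (gmul_linr _) (gmul_linl w)).
- exact: (islin_comp (gmul_linl w) (gmul_linr _)).
move=> y; move: w; apply: lin_ind.
- exact: gmul_linr.
- exact: (islin_comp (gmul_linr _) (gmul_linr _)).
by move=> z; rewrite !gmul_bs mulgA.
Qed.

Lemma gmul1r (u : A) : gmul u (bsX 1%g) = u.
Proof.
move: u; apply: lin_ind; [exact: gmul_linl | exact: islin_id |].
by move=> x; rewrite gmul_bs mulg1.
Qed.

Lemma gmul1l (u : A) : gmul (bsX 1%g) u = u.
Proof.
move: u; apply: lin_ind; [exact: gmul_linr | exact: islin_id |].
by move=> x; rewrite gmul_bs mul1g.
Qed.

Local Notation I n := (@aug_pow k X n).

Lemma aug_subsp n : subsp (I n).
Proof. case: n => [|m]; [by split | exact: kspan_subsp]. Qed.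

Lemma augi_subsp : subsp (@aug_ideal k X).
Proof. exact: kspan_subsp. Qed.

Lemma aug_gen x : aug_ideal (bsX x - bsX 1%g).
Proof. by apply: kspan_gen; exists x. Qed.

Lemma aug_diff x y : aug_ideal (bsX x - bsX y).
Proof.
have -> : bsX x - bsX y = (bsX x - bsX 1%g) - (bsX y - bsX 1%g).
  by rewrite opprB addrA subrK.
by apply: (subspB augi_subsp); apply: aug_gen.
Qed.

Lemma aug_idealR (u v : A) : aug_ideal u -> aug_ideal (gmul u v).
Proof.
move=> hu; move: u hu; apply: kspan_min.
  exact: (subsp_pre (gmul_linl v) augi_subsp).
move=> _ [g ->]; move: v; apply: subsp_ind.
  exact: (subsp_pre (gmul_linr _) augi_subsp).
by move=> y; rewrite (islinB _ _ (gmul_linl _)) !gmul_bs mul1g; apply: aug_diff.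
Qed.

Lemma aug_idealL (u v : A) : aug_ideal v -> aug_ideal (gmul u v).
Proof.
move=> hv; move: v hv; apply: kspan_min.
  exact: (subsp_pre (gmul_linr u) augi_subsp).
move=> _ [g ->]; move: u; apply: subsp_ind.
  exact: (subsp_pre (gmul_linl _) augi_subsp).
by move=> y; rewrite (islinB _ _ (gmul_linr _)) !gmul_bs mulg1; apply: aug_diff.
Qed.

Lemma aug_step n (u v : A) : I n u -> aug_ideal v -> I n.+1 (gmul u v).
Proof. by move=> hu hv; apply: kspan_gen; exists u, v. Qed.

Lemma aug_powR n (u v : A) : I n u -> I n (gmul u v).
Proof.
case: n => [//|n] hu; move: u hu; apply: kspan_min.
  exact: (subsp_pre (gmul_linl v) (aug_subsp _)).
move=> _ [u1 [w [h1 [hw ->]]]]; rewrite gmulA.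
by apply: aug_step => //; apply: aug_idealR.
Qed.

Lemma aug_powL n (u v : A) : I n v -> I n (gmul u v).
Proof.
elim: n v => [//|n IH] v hv; move: v hv; apply: kspan_min.
  exact: (subsp_pre (gmul_linr u) (aug_subsp _)).
move=> _ [u1 [w [h1 [hw ->]]]]; rewrite -gmulA.
by apply: aug_step => //; apply: IH.
Qed.

Lemma aug_powM a b (u v : A) : I a u -> I b v -> I (a + b) (gmul u v).
Proof.
elim: b v => [|b IH] v hu hv; first by rewrite addn0; apply: aug_powR.
rewrite addnS; move: v hv; apply: kspan_min.
  exact: (subsp_pre (gmul_linr u) (aug_subsp _)).
move=> _ [v1 [w [h1 [hw ->]]]]; rewrite -gmulA.
by apply: aug_step => //; apply: IH.
Qed.

Lemma aug_powS n (u : A) : I n.+1 u -> I n u.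
Proof.
move=> hu; move: u hu; apply: kspan_min; first exact: aug_subsp.
by move=> _ [u1 [w [h1 [hw ->]]]]; apply: aug_powR.
Qed.

Lemma aug_pow1 (v : A) : aug_ideal v -> I 1 v.
Proof. by move=> hv; rewrite -(gmul1l v); apply: aug_step. Qed.

End GA.

Section GMap.
Variables (k : comUnitRingType) (X Y : groupType) (f : X -> Y).

Lemma gmapE (u : galg k X) : gmap f u = lin (fun x => bs k (f x)) u.
Proof. by rewrite /gmap /lin; apply: eq_bigr => x _; rewrite bsZ. Qed.

Lemma gmap_lin : islin (@gmap k X Y f).
Proof. split=> *; rewrite !gmapE; [exact: linD | exact: linZ]. Qed.

Lemma gmap_bs x : gmap f (bs k x) = bs k (f x).
Proof. by rewrite gmapE lin_bs. Qed.

Hypothesis hf : group_hom f.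

Lemma gmapM (u v : galg k X) : gmap f (gmul u v) = gmul (gmap f u) (gmap f v).
Proof.
move: u; apply: lin_ind.
- exact: (islin_comp (gmul_linl v) gmap_lin).
- exact: (islin_comp gmap_lin (gmul_linl _)).
move=> x; move: v; apply: lin_ind.
- exact: (islin_comp (gmul_linr _) gmap_lin).
- exact: (islin_comp gmap_lin (gmul_linr _)).
by move=> y; rewrite !gmul_bs !gmap_bs gmul_bs hf.
Qed.

Lemma gmap_aug (u : galg k X) : aug_ideal u -> aug_ideal (gmap f u).
Proof.
move=> hu; move: u hu; apply: kspan_min.
  exact: (subsp_pre gmap_lin (@augi_subsp _ _)).
move=> _ [g ->]; rewrite (islinB _ _ gmap_lin) !gmap_bs (hom1 hf).
exact: aug_gen.
Qed.

Lemma gmap_pow n (u : galg k X) : aug_pow n u -> aug_pow n (gmap f u).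
Proof.
elim: n u => [//|n IH] u hu; move: u hu; apply: kspan_min.
  exact: (subsp_pre gmap_lin (@aug_subsp _ _ _)).
move=> _ [u1 [w [h1 [hw ->]]]]; rewrite gmapM.
by apply: aug_step; [exact: IH | exact: gmap_aug].
Qed.
End GMap.

Lemma zid (V: zmodType) (a b c d e : V) : (a - c) - (b - d) - ((e - b) - (c - d)) = a - e.
Proof.
rewrite !opprB !addrA; congr (_ - e).
rewrite (addrAC _ (-b) c) (addrAC _ d c) subrK (addrAC _ (-b) (-d)) addrK.
by rewrite subrK.
Qed.

Section Comm.
Variables (k : comUnitRingType) (X : groupType).
Local Notation bsX := (@bs k X).

Lemma comm_gen (x y : X) : aug_pow 2 (bsX [~ x, y]%g - bsX 1%g).
Proof.
have e : gmul (bsX x - bsX 1%g) (bsX y - bsX 1%g)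
       - gmul (bsX y - bsX 1%g) (bsX x - bsX 1%g) = bsX (x * y)%g - bsX (y * x)%g.
  rewrite !(islinB _ _ (gmul_linl _)) !(islinB _ _ (gmul_linr _)) !gmul_bs.
  by rewrite !mulg1 !mul1g zid.
have -> : bsX [~ x, y]%g - bsX 1%g = gmul (bsX ((y * x)^-1)%g) (bsX (x * y)%g - bsX (y * x)%g).
  rewrite (islinB _ _ (gmul_linr _)) !gmul_bs mulVg; congr (bsX _ - _).
  by rewrite invgM /commg /conjg !mulgA.
apply: aug_powL; rewrite -e; apply: (subspB (aug_subsp _ _ _)).
  by apply: (aug_powM (a := 1) (b := 1)); apply: aug_pow1; apply: aug_gen.
by apply: (aug_powM (a := 1) (b := 1)); apply: aug_pow1; apply: aug_gen.
Qed.

Lemma comm_I2 (c : X) : commutator_subgroup c -> aug_pow 2 (bsX c - bsX 1%g).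
Proof.
have gen : forall s : X, (exists x y : X, s = [~ x, y]%g) -> aug_pow 2 (bsX s - bsX 1%g).
  by move=> s [x [y ->]]; apply: comm_gen.
elim => [|s z hs _ IH|s z hs _ IH].
- by rewrite subrr; apply: subsp0; apply: aug_subsp.
- have -> : bsX (s * z)%g - bsX 1%g = gmul (bsX s - bsX 1%g) (bsX z) + (bsX z - bsX 1%g).
    by rewrite (islinB _ _ (gmul_linl _)) !gmul_bs mul1g addrA subrK.
  by apply: (subspD (aug_subsp _ _ _)) => //; apply: aug_powR; apply: gen.
- have -> : bsX (s^-1 * z)%g - bsX 1%g = gmul (bsX (s^-1)%g - bsX 1%g) (bsX z) + (bsX z - bsX 1%g).
    by rewrite (islinB _ _ (gmul_linl _)) !gmul_bs mul1g addrA subrK.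
  apply: (subspD (aug_subsp _ _ _)) => //; apply: aug_powR; apply: gen.
  by case: hs => x [y ->]; exists y, x; rewrite invgR.
Qed.
End Comm.

Lemma islin_sub (k : comUnitRingType) (U V : lmodType k) (f g : U -> V) :
  islin f -> islin g -> islin (fun u => f u - g u).
Proof.
move=> [fD fZ] [gD gZ]; split=> *; rewrite ?fD ?gD ?fZ ?gZ.
  by rewrite opprD addrACA.
by rewrite scalerBr.
Qed.

Section Tens.
Variables (k : comUnitRingType) (F H : groupType).
Local Notation bsT := (@bs k (F * H)%type).
Local Notation T := (tens k F H).

Lemma tmulE (u : galg k F) (v : galg k H) :
  tmul u v = lin (fun x => lin (fun y => bsT (x, y)) v) u.
Proof.
rewrite /tmul /lin; apply: eq_bigr => x _; rewrite scaler_sumr.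
by apply: eq_bigr => y _; rewrite bsZ scalerA.
Qed.

Lemma tmul_linl v : islin (fun u => @tmul k F H u v).
Proof. split=> *; rewrite !tmulE; [exact: linD | exact: linZ]. Qed.

Lemma tmul_linr u : islin (@tmul k F H u).
Proof.
split=> *; rewrite !tmulE.
  by rewrite -linfD; apply: eq_lin => x; rewrite linD.
by rewrite -linfZ; apply: eq_lin => x; rewrite linZ.
Qed.

Lemma tmul_bs x y : tmul (bs k x) (bs k y) = bsT (x, y).
Proof. by rewrite tmulE !lin_bs. Qed.

Lemma tactE (a : galg k F) (t : T) :
  tact a t = lin (fun x => lin (fun p => bsT ((x * p.1)%g, p.2)) t) a.
Proof.
rewrite /tact /lin; apply: eq_bigr => x _; rewrite scaler_sumr.
by apply: eq_bigr => y _; rewrite bsZ scalerA.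
Qed.

Lemma tact_linl (t : T) : islin (fun a => tact a t).
Proof. split=> *; rewrite !tactE; [exact: linD | exact: linZ]. Qed.

Lemma tact_linr a : islin (@tact k F H a).
Proof.
split=> *; rewrite !tactE.
  by rewrite -linfD; apply: eq_lin => x; rewrite linD.
by rewrite -linfZ; apply: eq_lin => x; rewrite linZ.
Qed.

Lemma tact_bs x p : tact (bs k x) (bsT p) = bsT ((x * p.1)%g, p.2).
Proof. by rewrite tactE !lin_bs. Qed.

Lemma tact_tmul (a u : galg k F) (v : galg k H) : tact a (tmul u v) = tmul (gmul a u) v.
Proof.
move: a; apply: lin_ind.
- exact: tact_linl.
- exact: (islin_comp (gmul_linl _) (tmul_linl _)).
move=> x; move: u; apply: lin_ind.
- exact: (islin_comp (tmul_linl _) (tact_linr _)).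
- exact: (islin_comp (gmul_linr _) (tmul_linl _)).
move=> y; move: v; apply: lin_ind.
- exact: (islin_comp (tmul_linr _) (tact_linr _)).
- exact: tmul_linr.
by move=> z; rewrite gmul_bs !tmul_bs tact_bs.
Qed.

Definition tR (h : H) (t : T) : T := lin (fun p => bsT (p.1, (p.2 * h)%g)) t.

Lemma tR_tmul h (u : galg k F) (v : galg k H) : tR h (tmul u v) = tmul u (gmul v (bs k h)).
Proof.
move: u; apply: lin_ind.
- exact: (islin_comp (tmul_linl _) (lin_islin _)).
- exact: tmul_linl.
move=> x; move: v; apply: lin_ind.
- exact: (islin_comp (tmul_linr _) (lin_islin _)).
- exact: (islin_comp (gmul_linl _) (tmul_linr _)).
by move=> y; rewrite !tmul_bs gmul_bs tmul_bs /tR lin_bs.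
Qed.

Local Notation filt n := (@tens_filt k F H n).

Lemma filt_subsp n : subsp (filt n).
Proof. exact: kspan_subsp. Qed.

Lemma filt_gen a b n (u : galg k F) (v : galg k H) : aug_pow a u -> aug_pow b v -> (a + b)%N = n -> filt n (tmul u v).
Proof. by move=> hu hv e; apply: kspan_gen; exists a, b, u, v. Qed.

Lemma filt0 (t : T) : filt 0 t.
Proof.
move: t; apply: subsp_ind; first exact: filt_subsp.
by move=> [x y]; rewrite -tmul_bs; apply: (filt_gen (a := 0) (b := 0)).
Qed.

Lemma filt_tact a m (u : galg k F) (t : T) : aug_pow a u -> filt m t -> filt (a + m) (tact u t).
Proof.
move=> hu ht; move: t ht; apply: kspan_min.
  exact: (subsp_pre (tact_linr _) (filt_subsp _)).
move=> _ [a' [b [u' [v [e [h1 [h2 ->]]]]]]]; rewrite tact_tmul.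
apply: (filt_gen (a := (a + a')%N) (b := b)) => //.
  exact: aug_powM.
by rewrite -addnA e.
Qed.

Lemma filt_tR n h (t : T) : filt n t -> filt n (tR h t).
Proof.
move: t; apply: kspan_min.
  exact: (subsp_pre (lin_islin _) (filt_subsp _)).
move=> _ [a [b [u [v [e [h1 [h2 ->]]]]]]]; rewrite tR_tmul.
by apply: (filt_gen (a := a) (b := b)) => //; apply: aug_powR.
Qed.

Lemma filt_tR1 n h (t : T) : filt n t -> filt n.+1 (tR h t - t).
Proof.
move: t; apply: kspan_min.
  exact: (subsp_pre (islin_sub (lin_islin _) (islin_id _)) (filt_subsp _)).
move=> _ [a [b [u [v [e [h1 [h2 ->]]]]]]]; rewrite tR_tmul.
rewrite -[in X in _ - X](gmul1r v) -(islinB _ _ (tmul_linr _)) -(islinB _ _ (gmul_linr _)).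
apply: (filt_gen (a := a) (b := b.+1)) => //; last by rewrite addnS e.
by apply: aug_step => //; apply: aug_gen.
Qed.

Lemma filt_S n (t : T) : filt n.+1 t -> filt n t.
Proof.
move: t; apply: kspan_min; first exact: filt_subsp.
move=> _ [[|a] [b [u [v [e [h1 [h2 ->]]]]]]].
  apply: (filt_gen (a := 0) (b := n)) => //.
  by move: e h2; rewrite add0n => -> /aug_powS.
apply: (filt_gen (a := a) (b := b)) => //; first exact: aug_powS.
by move: e; rewrite addSn => -[].
Qed.

End Tens.
Arguments tmul_linl {k F H} v.
Arguments tmul_linr {k F H} u.
Arguments tact_linl {k F H} t.
Arguments tact_linr {k F H} a.

Definition theta (F G H : groupType) (iota : F -> G) (sigma : H -> G) (h : H) (x : F) : F :=
  epsilon (inhabits 1%g) (fun y => iota y = (sigma h * iota x * (sigma h)^-1)%g).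

Definition decF (F G H : groupType) (iota : F -> G) (sigma : H -> G) (pi : G -> H) (g : G) : F :=
  epsilon (inhabits 1%g) (fun x => iota x = (g * (sigma (pi g))^-1)%g).

Section Main.
Variables (k : comUnitRingType) (F G H : groupType) (iota : F -> G) (pi : G -> H) (sigma : H -> G).
Hypotheses (hiota : group_hom iota) (hpi : group_hom pi) (hsigma : group_hom sigma)
  (iota_inj : injective iota)
  (exact_mid : forall g : G, pi g = 1%g <-> exists x : F, iota x = g)
  (split : forall h : H, pi (sigma h) = h).

Local Notation bsT := (@bs k (F * H)%type).
Local Notation T := (tens k F H).
Local Notation th := (theta iota sigma).
Local Notation Phi := (Phi (k := k) iota sigma).

Lemma pi_iota x : pi (iota x) = 1%g.
Proof. by apply/exact_mid; exists x. Qed.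

Lemma theta_spec h x : iota (th h x) = (sigma h * iota x * (sigma h)^-1)%g.
Proof.
apply: (@epsilon_spec _ _ (fun y => iota y = (sigma h * iota x * (sigma h)^-1)%g)).
apply/exact_mid; by rewrite !hpi (homV _ hpi) split pi_iota mulg1 mulgV.
Qed.

Lemma decF_spec g : (iota (decF iota sigma pi g) * sigma (pi g))%g = g.
Proof.
have -> : iota (decF iota sigma pi g) = (g * (sigma (pi g))^-1)%g.
  apply: (@epsilon_spec _ _ (fun x => iota x = (g * (sigma (pi g))^-1)%g)).
  by apply/exact_mid; rewrite hpi (homV _ hpi) split mulgV.
by rewrite mulgVK.
Qed.

Lemma theta_hom h : group_hom (th h).
Proof.
move=> x y; apply: iota_inj; rewrite hiota !theta_spec hiota !mulgA.
by rewrite mulgVK.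
Qed.

Lemma theta_M h h0 y : th (h * h0)%g y = th h (th h0 y).
Proof.
apply: iota_inj; rewrite !theta_spec hsigma invgM !mulgA //.
Qed.

Lemma theta1 h : th h 1%g = 1%g.
Proof. exact: hom1 (theta_hom h). Qed.

Lemma PhiE (t : T) : Phi t = lin (fun p => bs k (iota p.1 * sigma p.2)%g) t.
Proof. by rewrite /Defs.Phi /lin; apply: eq_bigr => x _; rewrite bsZ. Qed.

Lemma Phi_lin : islin Phi.
Proof. split=> *; rewrite !PhiE; [exact: linD | exact: linZ]. Qed.

Lemma Phi_bs p : Phi (bsT p) = bs k (iota p.1 * sigma p.2)%g.
Proof. by rewrite PhiE lin_bs. Qed.

Lemma Phi_tmul (u : galg k F) (v : galg k H) : Phi (tmul u v) = gmul (gmap iota u) (gmap sigma v).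
Proof.
move: u; apply: lin_ind.
- exact: (islin_comp (tmul_linl _) Phi_lin).
- exact: (islin_comp (gmap_lin _ _) (gmul_linl _)).
move=> x; move: v; apply: lin_ind.
- exact: (islin_comp (tmul_linr _) Phi_lin).
- exact: (islin_comp (gmap_lin _ _) (gmul_linr _)).
by move=> y; rewrite tmul_bs Phi_bs !gmap_bs gmul_bs.
Qed.

Lemma Phi_tact (a : galg k F) (t : T) : Phi (tact a t) = gmul (gmap iota a) (Phi t).
Proof.
move: a; apply: lin_ind.
- exact: (islin_comp (tact_linl _) Phi_lin).
- exact: (islin_comp (gmap_lin _ _) (gmul_linl _)).
move=> x; move: t; apply: lin_ind.
- exact: (islin_comp (tact_linr _) Phi_lin).
- exact: (islin_comp Phi_lin (gmul_linr _)).
by move=> p; rewrite tact_bs !Phi_bs gmap_bs gmul_bs hiota mulgA.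
Qed.

Lemma Phi_tR h (t : T) : Phi (tR h t) = gmul (Phi t) (bs k (sigma h)).
Proof.
move: t; apply: lin_ind.
- exact: (islin_comp (lin_islin _) Phi_lin).
- exact: (islin_comp Phi_lin (gmul_linl _)).
by move=> p; rewrite /tR lin_bs !Phi_bs gmul_bs hsigma mulgA.
Qed.

Definition tRF (x : F) (t : T) : T := lin (fun p => bsT ((p.1 * th p.2 x)%g, p.2)) t.

Lemma Phi_tRF x (t : T) : Phi (tRF x t) = gmul (Phi t) (bs k (iota x)).
Proof.
move: t; apply: lin_ind.
- exact: (islin_comp (lin_islin _) Phi_lin).
- exact: (islin_comp Phi_lin (gmul_linl _)).
by move=> p; rewrite /tRF lin_bs !Phi_bs gmul_bs /= hiota theta_spec !mulgA mulgVK.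
Qed.

Definition Psi (g : galg k G) : T := lin (fun g => bsT (decF iota sigma pi g, pi g)) g.

Lemma PsiPhi (t : T) : Psi (Phi t) = t.
Proof.
move: t; apply: lin_ind.
- exact: (islin_comp Phi_lin (lin_islin _)).
- exact: islin_id.
move=> [x h]; rewrite Phi_bs /Psi lin_bs /=.
have ph : pi (iota x * sigma h)%g = h by rewrite hpi pi_iota split mul1g.
congr bsT; congr pair; last exact: ph.
apply: iota_inj; apply: (@mulIg _ (sigma h)).
by rewrite -{2}ph decF_spec.
Qed.

Lemma PhiPsi (g : galg k G) : Phi (Psi g) = g.
Proof.
move: g; apply: lin_ind.
- exact: (islin_comp (lin_islin _) Phi_lin).
- exact: islin_id.
by move=> g; rewrite /Psi lin_bs Phi_bs /= decF_spec.
Qed.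

Definition psi (w : galg k F) (v : galg k H) : T :=
  lin (fun y => lin (fun h => bsT (th h y, h)) v) w.

Lemma psi_linl v : islin (fun w => psi w v).
Proof. exact: lin_islin. Qed.

Lemma psi_linr w : islin (psi w).
Proof.
split=> *; rewrite /psi.
  by rewrite -linfD; apply: eq_lin => x; rewrite linD.
by rewrite -linfZ; apply: eq_lin => x; rewrite linZ.
Qed.

Lemma psi_bs y h : psi (bs k y) (bs k h) = bsT (th h y, h).
Proof. by rewrite /psi !lin_bs. Qed.

Lemma psi_bs_r w h : psi w (bs k h) = tmul (gmap (th h) w) (bs k h).
Proof.
move: w; apply: lin_ind.
- exact: psi_linl.
- exact: (islin_comp (gmap_lin _ _) (tmul_linl _)).
by move=> y; rewrite psi_bs gmap_bs tmul_bs.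
Qed.

Lemma psi_mul w v h0 : psi w (gmul v (bs k h0)) = tR h0 (psi (gmap (th h0) w) v).
Proof.
move: w; apply: lin_ind.
- exact: psi_linl.
- exact: (islin_comp (islin_comp (gmap_lin _ _) (psi_linl _)) (lin_islin _)).
move=> y; move: v; apply: lin_ind.
- exact: (islin_comp (gmul_linl _) (psi_linr _)).
- exact: (islin_comp (psi_linr _) (lin_islin _)).
by move=> h; rewrite gmul_bs gmap_bs !psi_bs /tR lin_bs /= theta_M.
Qed.

Lemma psi_one v : psi (bs k 1%g) v = tmul (bs k 1%g) v.
Proof.
move: v; apply: lin_ind; [exact: psi_linr | exact: tmul_linr |].
by move=> h; rewrite psi_bs tmul_bs theta1.
Qed.

Lemma tRF_tmul x (u : galg k F) (v : galg k H) : tRF x (tmul u v) = tact u (psi (bs k x) v).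
Proof.
move: u; apply: lin_ind.
- exact: (islin_comp (tmul_linl _) (lin_islin _)).
- exact: tact_linl.
move=> y; move: v; apply: lin_ind.
- exact: (islin_comp (tmul_linr _) (lin_islin _)).
- exact: (islin_comp (psi_linr _) (tact_linr _)).
by move=> h; rewrite tmul_bs psi_bs tact_bs /tRF lin_bs.
Qed.


Lemma tR_lin h : islin (@tR k F H h).
Proof. exact: lin_islin. Qed.

Lemma tRF_lin x : islin (tRF x).
Proof. exact: lin_islin. Qed.

Lemma Psi_lin : islin Psi.
Proof. exact: lin_islin. Qed.

Section B.
Hypothesis hth : forall (h : H) (x y : F),
  iota y = (sigma h * iota x * (sigma h)^-1)%g -> commutator_subgroup (y * x^-1)%g.

Lemma theta_I2 h (z : galg k F) : aug_ideal z -> aug_pow 2 (gmap (th h) z - z).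
Proof.
move=> hz; move: z hz; apply: kspan_min.
  exact: (subsp_pre (islin_sub (gmap_lin _ _) (islin_id _)) (aug_subsp _ _ _)).
move=> _ [y ->]; rewrite (islinB _ _ (gmap_lin _ _)) !gmap_bs theta1.
have -> : bs k (th h y) - bs k 1%g - (bs k y - bs k 1%g)
          = gmul (bs k (th h y * y^-1)%g - bs k 1%g) (bs k y).
  by rewrite (islinB _ _ (gmul_linl _)) !gmul_bs mulgVK mul1g opprB addrA subrK.
apply: aug_powR; apply: comm_I2; exact: (hth (theta_spec h y)).
Qed.

Lemma theta_raise c h (w : galg k F) : aug_pow c w -> aug_pow c.+1 (gmap (th h) w - w).
Proof.
elim: c w => [|c IH] w hw.
  move: w {hw}; apply: subsp_ind.
    exact: (subsp_pre (islin_sub (gmap_lin _ _) (islin_id _)) (aug_subsp _ _ _)).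
  by move=> y; rewrite gmap_bs; apply: aug_pow1; apply: aug_diff.
move: w hw; apply: kspan_min.
  exact: (subsp_pre (islin_sub (gmap_lin _ _) (islin_id _)) (aug_subsp _ _ _)).
move=> _ [u [z [hu [hz ->]]]]; rewrite gmapM; last exact: theta_hom.
have -> : gmul (gmap (th h) u) (gmap (th h) z) - gmul u z
    = gmul (gmap (th h) u - u) (gmap (th h) z) + gmul u (gmap (th h) z - z).
  by rewrite (islinB _ _ (gmul_linl _)) (islinB _ _ (gmul_linr _)) addrA subrK.
apply: (subspD (aug_subsp _ _ _)).
  apply: aug_step; first exact: IH.
  by apply: gmap_aug => //; exact: theta_hom.
rewrite -addn2; apply: aug_powM => //; exact: theta_I2.
Qed.

Lemma psi_filt b : forall c (w : galg k F) (v : galg k H),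
  aug_pow c w -> aug_pow b v -> tens_filt (c + b) (psi w v).
Proof.
elim: b => [|b IH] c w v hw hv.
  rewrite addn0; move: v {hv}; apply: subsp_ind.
    exact: (subsp_pre (psi_linr _) (filt_subsp _ _ _ _)).
  move=> h; rewrite psi_bs_r; apply: (filt_gen (a := c) (b := 0)) => //; last by rewrite addn0.
  by apply: gmap_pow => //; exact: theta_hom.
move: v hv; apply: kspan_min.
  exact: (subsp_pre (psi_linr _) (filt_subsp _ _ _ _)).
move=> _ [v1 [z [h1 [hz ->]]]]; move: z hz; apply: kspan_min.
  exact: (subsp_pre (islin_comp (gmul_linr _) (psi_linr _)) (filt_subsp _ _ _ _)).
move=> _ [h0 ->]; rewrite (islinB _ _ (gmul_linr _)) gmul1r (islinB _ _ (psi_linr _)) psi_mul.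
have -> : tR h0 (psi (gmap (th h0) w) v1) - psi w v1
    = tR h0 (psi (gmap (th h0) w - w) v1) + (tR h0 (psi w v1) - psi w v1).
  by rewrite (islinB _ _ (psi_linl _)) (islinB _ _ (tR_lin _)) addrA subrK.
apply: (subspD (filt_subsp _ _ _ _)).
  rewrite addnS -addSn; apply: filt_tR; apply: IH => //; exact: theta_raise.
by rewrite addnS; apply: filt_tR1; exact: IH.
Qed.

Lemma tRF_filt n x (t : T) : tens_filt n t -> tens_filt n.+1 (tRF x t - t).
Proof.
move: t; apply: kspan_min.
  exact: (subsp_pre (islin_sub (tRF_lin _) (islin_id _)) (filt_subsp _ _ _ _)).
move=> _ [a [b [u [v [e [hu [hv ->]]]]]]].
have -> : tRF x (tmul u v) - tmul u v = tact u (psi (bs k x - bs k 1%g) v).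
  by rewrite tRF_tmul (islinB _ _ (psi_linl _)) (islinB _ _ (tact_linr _)) psi_one tact_tmul gmul1r.
rewrite -e -addnS; apply: filt_tact => //.
rewrite -add1n; apply: psi_filt => //; apply: aug_pow1; exact: aug_gen.
Qed.

Lemma aug_to_filt n (g : galg k G) : aug_pow n g -> tens_filt n (Psi g).
Proof.
elim: n g => [|n IH] g hg; first exact: filt0.
move: g hg; apply: kspan_min.
  exact: (subsp_pre Psi_lin (filt_subsp _ _ _ _)).
move=> _ [u [v [hu [hv ->]]]].
have ht := IH u hu; rewrite -(PhiPsi u); move: (Psi u) ht => t ht.
move: v hv; apply: kspan_min.
  exact: (subsp_pre (islin_comp (gmul_linr _) Psi_lin) (filt_subsp _ _ _ _)).
move=> _ [g ->].
have -> : gmul (Phi t) (gb k g - gb k 1%g)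
    = Phi (tR (pi g) (tRF (decF iota sigma pi g) t) - t).
  rewrite (islinB _ _ Phi_lin) Phi_tR Phi_tRF (islinB _ _ (gmul_linr _)) gmul1r.
  by rewrite gmulA gmul_bs decF_spec.
rewrite PsiPhi.
set s := tRF _ t.
have hs1 : tens_filt n.+1 (s - t) by apply: tRF_filt.
have hs : tens_filt n s.
  rewrite -(subrK t s); apply: (subspD (filt_subsp _ _ _ _)) => //; exact: filt_S.
have -> : tR (pi g) s - t = (tR (pi g) s - s) + (s - t) by rewrite addrA subrK.
apply: (subspD (filt_subsp _ _ _ _)) => //; exact: filt_tR1.
Qed.

End B.

Lemma main_stmt :
  ((forall t1 t2 : tens k F H,
      Phi (t1 + t2) = Phi t1 + Phi t2)
   /\ (forall (c : k) (t : tens k F H),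
      Phi (c *: t) = c *: Phi t)
   /\ (forall (a : galg k F) (t : tens k F H),
      Phi (tact a t) = gact iota a (Phi t))
   /\ bijective Phi)
  /\
  ((forall (h : H) (x y : F),
      iota y = (sigma h * iota x * (sigma h)^-1)%g ->
      commutator_subgroup (y * x^-1)%g) ->
   forall n : nat,
     (forall t : tens k F H,
        tens_filt n t -> @aug_pow k G n (Phi t))
     /\ (forall g : galg k G,
        @aug_pow k G n g -> exists t, tens_filt n t /\ Phi t = g)).
Proof.
split.
  split; first exact: (proj1 Phi_lin).
  split; first exact: (proj2 Phi_lin).
  split; first by move=> a t; rewrite /gact; exact: Phi_tact.
  by exists Psi; [exact: PsiPhi | exact: PhiPsi].
move=> hth n; split.
  move=> t ht; move: t ht; apply: kspan_min.
    exact: (subsp_pre Phi_lin (aug_subsp _ _ _)).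
  move=> _ [a [b [u [v [e [hu [hv ->]]]]]]]; rewrite Phi_tmul -e.
  by apply: aug_powM; apply: gmap_pow.
move=> g hg; exists (Psi g); split; [exact: aug_to_filt | exact: PhiPsi].
Qed.

End Main.


Unset Implicit Arguments.

Theorem propositionC1
  (k : comUnitRingType) (hk : is_Qalgebra k)
  (F G H : groupType) (iota : F -> G) (pi : G -> H) (sigma : H -> G)
  (hiota : group_hom iota) (hpi : group_hom pi) (hsigma : group_hom sigma)
  (iota_inj : injective iota)
  (pi_surj : forall h : H, exists g : G, pi g = h)
  (exact_mid : forall g : G, pi g = 1%g <-> exists x : F, iota x = g)
  (split : forall h : H, pi (sigma h) = h) :
  (* (a) Phi is an isomorphism of left kF-modules *)
  ((forall t1 t2 : tens k F H,
      Phi iota sigma (t1 + t2) = Phi iota sigma t1 + Phi iota sigma t2)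
   /\ (forall (c : k) (t : tens k F H),
      Phi iota sigma (c *: t) = c *: Phi iota sigma t)
   /\ (forall (a : galg k F) (t : tens k F H),
      Phi iota sigma (tact a t) = gact iota a (Phi iota sigma t))
   /\ bijective (Phi (k := k) iota sigma))
  /\
  (* (b) if every Theta_h induces the identity on F^ab, Phi maps
     sum_{a+b=n} I_F^a (x) I_H^b onto I_G^n *)
  ((forall (h : H) (x y : F),
      iota y = (sigma h * iota x * (sigma h)^-1)%g ->
      commutator_subgroup (y * x^-1)%g) ->
   forall n : nat,
     (forall t : tens k F H,
        tens_filt n t -> @aug_pow k G n (Phi iota sigma t))
     /\ (forall g : galg k G,
        @aug_pow k G n g -> exists t, tens_filt n t /\ Phi iota sigma t = g)).
Proof.
exact: (@main_stmt k F G H iota pi sigma hiota hpi hsigma iota_inj exact_mid split).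
Qed.
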